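(* Let $R$ be a ring with identity and involution $*$. Consider the conditions: (1) $R$ is directly finite, i.e. for all $a,b\in R$, $ab=1$ implies $ba=1$; (2) for all $a,b\in R$, if $bab=b$, $(ab)^*=ab$ and $ba^2=a$, then $a$ is core invertible with $a^{\oplus}=b$; (3) for all $a,b\in R$, if $aba=a$, $(ab)^*=ab$ and $ba^2=a$, then $a$ is core invertible with $a^{\oplus}=bab$; (4) for all $a\in R$, if $a^*a=1$, then $aa^*=1$. Then (1) $\Rightarrow$ (2) $\Rightarrow$ (3) $\Rightarrow$ (4).
   Context: An involution on $R$ satisfies $(a^* )^*=a$, $(ab)^*=b^*a^*$, $(a+b)^*=a^*+b^*$. An element $x\in R$ is a core inverse of $a$ if $axa=a$, $xR=aR$ and $Rx=Ra^*$; it is unique when it exists and is denoted $a^{\oplus}$. *)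

(* Defs.v *)
From mathcomp Require Import all_boot all_algebra.
Set Implicit Arguments. Unset Strict Implicit. Unset Printing Implicit Defensive.
Import GRing.Theory.
Local Open Scope ring_scope.

Definition involution (R : pzRingType) (star : R -> R) : Prop :=
  [/\ forall a, star (star a) = a,
      forall a b, star (a * b) = star b * star a
    & forall a b, star (a + b) = star a + star b].

Definition in_rideal (R : pzRingType) (x y : R) : Prop := exists r, y = x * r.
Definition in_lideal (R : pzRingType) (x y : R) : Prop := exists r, y = r * x.

Definition core_inverse (R : pzRingType) (star : R -> R) (a x : R) : Prop :=
  [/\ a * x * a = a,
      forall y, in_rideal x y <-> in_rideal a y
    & forall y, in_lideal x y <-> in_lideal (star a) y].

(* Main.v *)
Require Import Defs.
From mathcomp Require Import all_boot all_algebra.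
Import GRing.Theory.
Local Open Scope ring_scope.

Lemma zz (V : zmodType) (a u v o : V) : u + (a + (o - v) - (a + u - v)) = o.
Proof. by rewrite opprB opprD addrC -!addrA addKr addrC -!addrA (addKr u) addNr addr0. Qed.

Theorem theorem3p10 (R : pzRingType) (star : R -> R) (Hstar : involution star) :
  let C1 := forall a b : R, a * b = 1 -> b * a = 1 in
  let C2 := forall a b : R, b * a * b = b -> star (a * b) = a * b ->
              b * a ^+ 2 = a -> core_inverse star a b in
  let C3 := forall a b : R, a * b * a = a -> star (a * b) = a * b ->
              b * a ^+ 2 = a -> core_inverse star a (b * a * b) in
  let C4 := forall a : R, star a * a = 1 -> a * star a = 1 in
  (C1 -> C2) /\ (C2 -> C3) /\ (C3 -> C4).
Proof.
case: Hstar => Hss Hmul Hadd.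
move=> C1 C2 C3 C4; split; [|split].
- move=> H1 a b Hbab Hab Hba2.
  rewrite expr2 mulrA in Hba2.
  set x := b + (1 - b * a). set y := a + (1 - a * b).
  have Hby : b * y = b * a.
    by rewrite /y mulrDr mulrBr mulr1 mulrA Hbab subrr addr0.
  have Hbay : b * a * y = a + b * a - a * b.
    by rewrite /y mulrDr mulrBr mulr1 Hba2 !mulrA -(mulrA b a a) mulrA Hba2 addrA.
  have Hxy : x * y = 1.
    by rewrite /x mulrDl Hby mulrBl mul1r Hbay /y zz.
  have Hyx := H1 _ _ Hxy.
  have Hxp : x * (1 - a * b) = 1 - b * a.
    have E1 : b * (1 - a * b) = 0 by rewrite mulrBr mulr1 mulrA Hbab subrr.
    have E2 : b * a * (1 - a * b) = b * a - a * b.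
      by rewrite mulrBr mulr1 mulrA -(mulrA b a a) mulrA Hba2.
    rewrite /x mulrDl E1 add0r mulrBl mul1r E2.
    by rewrite opprB addrA subrK.
  have Ha : (1 - a * b) * a = 0.
    by rewrite -[LHS]mul1r -{1}Hyx -mulrA (mulrA x) Hxp mulrBl mul1r Hba2 subrr mulr0.
  have Hb : (1 - a * b) * b = 0.
    by rewrite -[LHS]mul1r -{1}Hyx -mulrA (mulrA x) Hxp mulrBl mul1r Hbab subrr mulr0.
  have Haba : a * b * a = a by move/eqP: Ha; rewrite mulrBl mul1r subr_eq0 => /eqP.
  have Habb : a * (b * b) = b by move/eqP: Hb; rewrite mulrBl mul1r subr_eq0 mulrA => /eqP.
  split => //.
  + move=> z; split => -[r ->].
    * by exists (b * b * r); rewrite !mulrA -(mulrA a b b) Habb.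
    * by exists (a * a * r); rewrite !mulrA Hba2.
  + move=> z; split => -[r ->].
    * exists (r * b * star b).
      by rewrite -[X in _ = X]mulrA -Hmul Hab -!mulrA (mulrA b a b) Hbab.
    * exists (r * star a * a); rewrite -!mulrA; congr (_ * _).
      by rewrite -{1}Haba Hmul Hab.
- move=> H2 a b Haba Hab Hba2.
  have K : forall z, a * (b * (a * z)) = a * z by move=> z; rewrite !mulrA Haba.
  apply: H2.
  + by rewrite -!mulrA !K.
  + by rewrite -!mulrA !K.
  + by rewrite expr2 -!mulrA !K -expr2.
- move=> H3 a Ha.
  have Haa : star a * (a * star a) = star a by rewrite mulrA Ha mul1r.
  case: (H3 a (star a)).
  + by rewrite -mulrA Ha mulr1.
  + by rewrite Hmul Hss.
  + by rewrite expr2 mulrA Ha mul1r.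
  move=> _ Hr _.
  have [s Hs] : in_rideal a 1.
    by apply/Hr; exists a; rewrite Ha mul1r Ha.
  by rewrite -[LHS]mulr1 Hs mulrA -(mulrA a) Ha mulr1 -Hs.
Qed.
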